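(* If $S$ is a cyclotomic numerical semigroup, then $S$ is symmetric.
   Context: A numerical semigroup is a submonoid $S$ of $(\mathbb N,+)$ with $\mathbb N\setminus S$ finite; its Frobenius number $\mathrm F(S)$ is the largest integer not in $S$. $S$ is symmetric if $S\cup(\mathrm F(S)-S)=\mathbb Z$, where $\mathrm F(S)-S=\{\mathrm F(S)-s: s\in S\}$. The semigroup polynomial is $\mathrm P_S(x)=(1-x)\sum_{s\in S}x^s$, and $S$ is cyclotomic if $\mathrm P_S$ (a monic integer polynomial) has all its complex roots in the closed unit disc. *)

(* Defs.v *)
From mathcomp Require Import all_boot all_order all_algebra all_field.
Set Implicit Arguments. Unset Strict Implicit. Unset Printing Implicit Defensive.
Import Order.TTheory GRing.Theory Num.Theory.
Local Open Scope ring_scope.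

Definition numerical_semigroup (S : nat -> bool) : Prop :=
  [/\ S 0%N,
      (forall a b, S a -> S b -> S (a + b)%N) &
      exists N : nat, forall n, (N <= n)%N -> S n].

Definition inS (S : nat -> bool) (z : int) : bool :=
  (0 <= z) && S `|z|%N.

Definition is_frobenius (S : nat -> bool) (f : int) : Prop :=
  ~~ inS S f /\ (forall z : int, f < z -> inS S z).

Definition symmetric_ns (S : nat -> bool) : Prop :=
  exists f : int, is_frobenius S f /\
    forall z : int, inS S z \/ exists s : nat, S s /\ z = f - s%:Z.

(* Coefficient of x^i in (1 - x) * sum_{s in S} x^s :
   [i in S] - [i - 1 in S]. *)
Definition sg_coef (S : nat -> bool) (i : nat) : algC :=
  (S i)%:R - ((0 < i)%N && S i.-1)%:R.

(* Truncation of the power series (1 - x) sum_{s in S} x^s to degree < N;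
   when every n >= N.-1 lies in S, all coefficients of degree >= N vanish,
   so this is exactly the semigroup polynomial P_S. *)
Definition sg_poly (S : nat -> bool) (N : nat) : {poly algC} :=
  \poly_(i < N) sg_coef S i.

Definition cyclotomic_ns (S : nat -> bool) : Prop :=
  forall N : nat, (forall n, (N <= n)%N -> S n) ->
    forall z : algC, root (sg_poly S N.+1) z -> `|z| <= 1.

(* Main.v *)
Require Import Defs.
From mathcomp Require Import all_boot all_order all_algebra all_field zify ring.
Import Order.TTheory GRing.Theory Num.Theory.
Local Open Scope ring_scope.
Import Num.Def.


Lemma prod_norm_le1 (r : seq algC) :
  (forall z, z \in r -> `|z| <= 1) -> \prod_(z <- r) `|z| <= 1.
Proof.
move=> Hle; rewrite big_seq; apply: prodr_ile1 => i Hi.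
by rewrite normr_ge0 Hle.
Qed.

Lemma prod_norm_one (r : seq algC) :
  (forall z, z \in r -> `|z| <= 1) -> \prod_(z <- r) `|z| = 1 ->
  forall z, z \in r -> `|z| = 1.
Proof.
elim: r => [|a r IH] Hle; first by [].
rewrite big_cons => Hp z; rewrite inE.
have Ha : `|a| <= 1 by apply: Hle; rewrite inE eqxx.
have Hr : \prod_(z <- r) `|z| <= 1.
  by apply: prod_norm_le1 => y Hy; apply: Hle; rewrite inE Hy orbT.
have Ha1 : `|a| = 1.
  apply/eqP; rewrite eq_le Ha /= -{1}Hp.
  by rewrite -{2}(mulr1 `|a|); apply: ler_wpM2l => //; apply: normr_ge0.
have Hr1 : \prod_(z <- r) `|z| = 1 by move: Hp; rewrite Ha1 mul1r.
case/orP => [/eqP -> //|Hz].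
by apply: IH => // y Hy; apply: Hle; rewrite inE Hy orbT.
Qed.

Lemma rev_eval (r : seq algC) :
  (forall z, z \in r -> z != 0) -> forall x : algC, x != 0 ->
  x ^+ size r * (\prod_(z <- r) ('X - z%:P)).[x^-1] =
  (\prod_(z <- r) (-z)) * (\prod_(z <- r) ('X - (z^-1)%:P)).[x].
Proof.
move=> Hnz x Hx; elim: r Hnz => [|a r IH] Hnz.
  by rewrite !big_nil expr0 !hornerE.
have Ha : a != 0 by apply: Hnz; rewrite inE eqxx.
rewrite /= !big_cons !hornerM exprS.
rewrite mulrACA IH; last by move=> y Hy; apply: Hnz; rewrite inE Hy orbT.
rewrite [RHS]mulrACA !hornerXsubC; congr (_ * _).
rewrite mulrBr mulfV // mulrBr !mulNr mulfV // opprK.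
by rewrite addrC mulrC.
Qed.

Lemma poly_eq0_nz (p : {poly algC}) : (forall x, x != 0 -> p.[x] = 0) -> p = 0.
Proof.
move=> H; apply/eqP/negPn/negP => Hp.
pose rs := [seq i.+1%:R | i <- iota 0 (size p)] : seq algC.
have Hall : all (root p) rs.
  rewrite all_map; apply/allP => i _ /=; apply/rootP; apply: H.
  by rewrite pnatr_eq0.
have Hu : uniq rs.
  rewrite map_inj_uniq ?iota_uniq // => i j /eqP.
  by rewrite eqr_nat => /eqP [].
have := max_poly_roots Hp Hall Hu.
by rewrite size_map size_iota ltnn.
Qed.

Import Num.Def.

Lemma palin (p : {poly algC}) (m : nat) : size p = m.+1 -> lead_coef p = 1 ->
  p.[0] = 1 -> map_poly conjC p = p -> (forall z, root p z -> `|z| <= 1) ->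
  forall i, (i <= m)%N -> p`_i = p`_(m - i).
Proof.
move=> Hs Hl H0 Hc Hr.
have [rs Hrs] := closed_field_poly_normal p.
rewrite Hl scale1r in Hrs.
have Hsz : size rs = m.
  by move: Hs; rewrite Hrs size_prod_XsubC => -[].
have Hin : forall z, z \in rs -> `|z| <= 1.
  by move=> z Hz; apply: Hr; rewrite Hrs root_prod_XsubC.
have Hprod : \prod_(z <- rs) (-z) = 1.
  rewrite -[RHS]H0 Hrs horner_prod; apply: eq_bigr => z _.
  by rewrite hornerXsubC sub0r.
have Hn1 : forall z, z \in rs -> `|z| = 1.
  apply: prod_norm_one => //.
  have : `|\prod_(z <- rs) (-z)| = 1 by rewrite Hprod normr1.
  by rewrite normr_prod; under eq_bigr do rewrite normrN.
have Hnz : forall z, z \in rs -> z != 0.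
  move=> z Hz; apply/eqP => Hz0; have := Hn1 z Hz.
  by rewrite Hz0 normr0 => /eqP; rewrite eq_sym oner_eq0.
have Hinv : forall z, z \in rs -> z^-1 = z^*.
  by move=> z Hz; rewrite invC_norm Hn1 // expr1n invr1 mul1r.
have Hconj : \prod_(z <- rs) ('X - (z^-1)%:P) = p.
  transitivity (\prod_(z <- rs) ('X - (z^*)%:P)).
    by rewrite big_seq [RHS]big_seq; apply: eq_bigr => z Hz; rewrite Hinv.
  rewrite -[RHS]Hc {1}Hrs rmorph_prod; apply: eq_bigr => z _.
  by rewrite rmorphB /= map_polyX map_polyC.
have Hev : forall x, x != 0 -> x ^+ m * p.[x^-1] = p.[x].
  move=> x Hx; have := @rev_eval rs Hnz x Hx.
  by rewrite Hsz Hprod mul1r Hconj -Hrs.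
pose q := \poly_(i < m.+1) p`_(m - i).
have Hq : q = p.
  apply/eqP; rewrite -subr_eq0; apply/eqP; apply: poly_eq0_nz => x Hx.
  rewrite hornerD hornerN -Hev // horner_poly horner_coef Hs mulr_sumr.
  rewrite (reindex_inj rev_ord_inj) /=; apply/eqP; rewrite subr_eq0; apply/eqP.
  apply: eq_bigr => j _; have Hj : (j <= m)%N by rewrite -ltnS.
  rewrite subSS subKn // mulrCA exprVn; congr (_ * _).
  by rewrite expfB_cond ?(negPf Hx).
by move=> i Hi; rewrite -{1}Hq coef_poly ltnS Hi.
Qed.

Lemma min_cond (S : nat -> bool) : numerical_semigroup S ->
  exists m : nat, (forall n, (m <= n)%N -> S n) /\ ((0 < m)%N -> ~~ S m.-1).
Proof.
case=> _ _ [N0 HN0].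
pose P := fun k : nat => [forall i : 'I_N0, (k <= i)%N ==> S i].
have PN : forall k, P k -> forall n, (k <= n)%N -> S n.
  move=> k /forallP Hk n Hn; case: (ltnP n N0) => HnN; last exact: HN0.
  by have := Hk (Ordinal HnN); rewrite Hn.
have exP : exists k, P k by exists N0; apply/forallP => i; rewrite leqNgt ltn_ord.
case: (ex_minnP exP) => m Pm Hmin; exists m; split; first exact: PN.
move=> Hm; apply/negP => Sm.
have : P m.-1.
  apply/forallP => i; apply/implyP => Hi.
  case: (ltnP i m) => Him; last by apply: (PN m Pm).
  by have -> : nat_of_ord i = m.-1 by lia.
by move/Hmin; lia.
Qed.

Lemma telescope (S : nat -> bool) (m : nat) :
  S 0 -> (0 < m)%N -> ~~ S m.-1 ->
  (forall i, (i <= m)%N -> sg_coef S i = sg_coef S (m - i)%N) ->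
  forall i, (i < m)%N -> (S i)%:R + (S (m.-1 - i)%N)%:R = 1 :> algC.
Proof.
move=> S0 Hm Sm Hpal; elim=> [|i IH] Hi.
  by rewrite S0 subn0 (negPf Sm) addr0.
have := Hpal i.+1 (ltnW Hi); rewrite /sg_coef /=.
have -> : (m - i.+1 = (m.-1 - i))%N by lia.
have Hpos : (0 < m.-1 - i)%N by lia.
rewrite Hpos /=.
have -> : ((m.-1 - i).-1 = m.-1 - i.+1)%N by lia.
move=> E; rewrite -[RHS](IH (ltnW Hi)); apply/eqP; rewrite -subr_eq0.
set a := (S i.+1)%:R; set b := (S i)%:R; set c := (S (m.-1 - i)%N)%:R.
set d := (S (m.-1 - i.+1)%N)%:R.
have -> : a + d - (b + c) = (a - b) - (c - d) :> algC by ring.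
by rewrite E subrr.
Qed.

Theorem theorem1 (S : nat -> bool) :
  numerical_semigroup S -> cyclotomic_ns S -> symmetric_ns S.
Proof.
move=> Hns Hcyc.
have [m [Hall Hnot]] := @min_cond S Hns.
have S0 : S 0 by case: Hns.
have Hcm : sg_coef S m = 1.
  rewrite /sg_coef Hall //; case: (posnP m) => [->|Hm] //=.
    by rewrite subr0.
  by rewrite (negPf (Hnot Hm)) subr0.
have Hpal : forall i, (i <= m)%N -> sg_coef S i = sg_coef S (m - i)%N.
  pose p := sg_poly S m.+1.
  have Hs : size p = m.+1 by rewrite size_poly_eq //= Hcm oner_neq0.
  have Hl : lead_coef p = 1 by rewrite lead_coef_poly //= Hcm oner_neq0.
  have H0 : p.[0] = 1.
    by rewrite horner_coef0 coef_poly /= /sg_coef S0 /= subr0.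
  have Hc : map_poly conjC p = p.
    apply/polyP => i; rewrite coef_map /= coef_poly.
    case: ifP => _; last by rewrite rmorph0.
    by rewrite /sg_coef rmorphB /= !conjC_nat.
  move=> i Hi.
  have := @palin p m Hs Hl H0 Hc (Hcyc m Hall) i Hi.
  by rewrite !coef_poly ltnS Hi ltnS leq_subr.
have Hgt : forall z : int, m%:Z - 1 < z -> inS S z.
  move=> z Hz; rewrite /inS; apply/andP; split; first by lia.
  by apply: Hall; lia.
exists (m%:Z - 1); split.
  split=> //; rewrite /inS; apply/negP => /andP [H1 H2].
  have Hm : (0 < m)%N by lia.
  have Hab : `|(m%:Z - 1)%R|%N = m.-1 by lia.
  by move: H2; rewrite Hab (negPf (Hnot Hm)).
move=> z; case: (ltP (m%:Z - 1) z) => Hz; first by left; apply: Hgt.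
case: (ltP z 0) => Hz0.
  right; exists `|(m%:Z - 1 - z)%R|%N; split; first by apply: Hall; lia.
  by lia.
have Hm : (0 < m)%N by lia.
case HSi : (S `|z|%N); first by left; rewrite /inS HSi andbT.
right; exists (m.-1 - `|z|)%N; split; last by lia.
have := @telescope S m S0 Hm (Hnot Hm) Hpal `|z|%N ltac:(lia).
rewrite HSi add0r; case: (S _) => //= /eqP.
by rewrite eq_sym oner_eq0.
Qed.
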